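(* Let $G=(V,E)$ be an atomic bispanning graph with vertex-connectivity $2$ which is the $2$-clique sum of two simple bispanning graphs $G_1=(V_1,E_1)$ and $G_2=(V_2,E_2)$ at edges $d_1\in E_1$ and $d_2\in E_2$ (i.e. $G$ arises from the disjoint union of $G_1,G_2$ by identifying the ends of $d_1$ with those of $d_2$ and deleting $d_1,d_2$). Let $$V_\eta=\{((S_1,T_1),(S_2,T_2))\in V_{\tau(G_1)}\times V_{\tau(G_2)}:\text{not }((d_1\in S_1\text{ and }d_2\in S_2)\text{ or }(d_1\in T_1\text{ and }d_2\in T_2))\}.$$ Then there is a bijection $\varphi_v:V_{\tau(G)}\to V_\eta$.
   Context: Graphs are finite, undirected, may have parallel edges, no loops. A spanning tree of $H$ is an edge set $T$ with $(V(H),T)$ connected and acyclic; $H$ is bispanning if its edge set is the union of two disjoint spanning trees; a bispanning graph is atomic if its only bispanning subgraphs are itself and single vertices. Vertex-connectivity is the largest $k$ with $|V|>k$ such that deleting fewer than $k$ vertices leaves the graph connected. For a bispanning graph $H$, $V_{\tau(H)}$ is the set of ordered pairs $(S,T)$ of disjoint spanning trees of $H$ whose union is the edge set of $H$. *)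

(* Defs.v *)
From mathcomp Require Import all_boot.
Set Implicit Arguments. Unset Strict Implicit. Unset Printing Implicit Defensive.

(* A finite multigraph: vertex type, edge type, and the two ends of each edge
   (the orientation of the pair is irrelevant everywhere below). No loops. *)
Record mgraph := MGraph {
  gV : finType;
  gE : finType;
  gends : gE -> gV * gV;
  gnoloop : forall e, (gends e).1 != (gends e).2 }.

Section Defs.
Variable G : mgraph.
Local Notation V := (gV G).
Local Notation E := (gE G).
Local Notation ends := (gends (m:=G)).

Definition joins (e : E) (u v : V) : bool :=
  (ends e == (u, v)) || (ends e == (v, u)).

Definition adj (F : {set E}) : rel V :=
  fun u v => [exists e in F, joins e u v].

Definition connected_on (W : {set V}) (F : {set E}) : bool :=
  [forall u in W, forall v in W, connect (adj F) u v].

Definition acyclic (F : {set E}) : bool :=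
  [forall e in F, ~~ connect (adj (F :\ e)) (ends e).1 (ends e).2].

Definition spanning_tree_on (W : {set V}) (F T : {set E}) : bool :=
  [&& T \subset F, connected_on W T & acyclic T].

Definition spanning_tree (T : {set E}) : bool := spanning_tree_on setT setT T.

Definition is_subgraph (W : {set V}) (F : {set E}) : Prop :=
  W != set0 /\ forall e, e \in F -> ((ends e).1 \in W) && ((ends e).2 \in W).

Definition bispanning_on (W : {set V}) (F : {set E}) : Prop :=
  exists S T : {set E}, [/\ spanning_tree_on W F S, spanning_tree_on W F T,
                          [disjoint S & T] & S :|: T = F].

Definition bispanning : Prop := bispanning_on setT setT.

Definition atomic : Prop :=
  bispanning /\
  forall (W : {set V}) (F : {set E}), is_subgraph W F -> bispanning_on W F ->
    (W = setT /\ F = setT) \/ #|W| = 1.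

(* simple: no parallel edges (no loops holds by construction) *)
Definition simple_graph : Prop :=
  forall e f : E, e != f -> ~~ joins f (ends e).1 (ends e).2.

Definition connected_after_deleting (X : {set V}) : Prop :=
  forall u v, u \notin X -> v \notin X ->
    connect (adj [set e | ((ends e).1 \notin X) && ((ends e).2 \notin X)]) u v.

Definition vconn_ge (k : nat) : Prop :=
  k < #|V| /\ forall X : {set V}, #|X| < k -> connected_after_deleting X.

(* vertex-connectivity equals 2 (the admissible k are downward closed) *)
Definition vertex_connectivity_two : Prop := vconn_ge 2 /\ ~ vconn_ge 3.

Definition Vtau : {set {set E} * {set E}} :=
  [set p | [&& spanning_tree p.1, spanning_tree p.2,
              [disjoint p.1 & p.2] & p.1 :|: p.2 == setT]].

End Defs.

(* G is (isomorphic to) the 2-clique sum of G1 and G2 at d1 and d2: the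
   vertices of G are those of G1 and G2 with the ends of d1 identified with
   the ends of d2 (first with first, second with second), and the edges of G
   are those of G1 other than d1 together with those of G2 other than d2. *)
Definition clique_sum2 (G G1 G2 : mgraph) (d1 : gE G1) (d2 : gE G2) : Prop :=
  exists (i1 : gV G1 -> gV G) (i2 : gV G2 -> gV G)
         (j1 : gE G1 -> gE G) (j2 : gE G2 -> gE G),
  [/\ injective i1 /\ injective i2,
      i1 (gends d1).1 = i2 (gends d2).1 /\ i1 (gends d1).2 = i2 (gends d2).2,
      (forall x y, i1 x = i2 y ->
         (x = (gends d1).1 /\ y = (gends d2).1) \/
         (x = (gends d1).2 /\ y = (gends d2).2)) /\
      (forall v : gV G, (exists x, i1 x = v) \/ (exists y, i2 y = v)),
      (forall e e', e != d1 -> e' != d1 -> j1 e = j1 e' -> e = e') /\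
      (forall e e', e != d2 -> e' != d2 -> j2 e = j2 e' -> e = e') /\
      (forall e1 e2, e1 != d1 -> e2 != d2 -> j1 e1 <> j2 e2) /\
      (forall e : gE G, (exists e1, e1 != d1 /\ j1 e1 = e) \/
                        (exists e2, e2 != d2 /\ j2 e2 = e)) &
      (forall e, e != d1 -> joins (j1 e) (i1 (gends e).1) (i1 (gends e).2)) /\
      (forall e, e != d2 -> joins (j2 e) (i2 (gends e).1) (i2 (gends e).2))].

Arguments clique_sum2 : clear implicits.

Definition Veta (G1 G2 : mgraph) (d1 : gE G1) (d2 : gE G2) :
  {set ({set gE G1} * {set gE G1}) * ({set gE G2} * {set gE G2})} :=
  [set p | [&& p.1 \in Vtau G1, p.2 \in Vtau G2 &
      ~~ (((d1 \in p.1.1) && (d2 \in p.2.1)) ||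
          ((d1 \in p.1.2) && (d2 \in p.2.2)))]].

(* Main.v *)
Require Import Defs.
From mathcomp Require Import all_boot zify.
Set Implicit Arguments. Unset Strict Implicit. Unset Printing Implicit Defensive.

Lemma connect_inv (T : finType) (r : rel T) (P : T -> Prop) x y :
  P x -> (forall z w, P z -> r z w -> P w) -> connect r x y -> P y.
Proof.
move=> Px step /connectP [p pth ->]; elim: p x Px pth => [|z p IH] x Px //=.
by case/andP=> rxz pz; apply: IH pz; apply: step rxz.
Qed.

Section Gen.
Variable H : mgraph.
Local Notation V := (gV H).
Local Notation E := (gE H).
Local Notation ends := (gends (m:=H)).

Lemma joinsC (e : E) u v : joins e u v = joins e v u.
Proof. by rewrite /joins orbC. Qed.

Lemma adjC (F : {set E}) : symmetric (adj F).
Proof.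
move=> u v; apply/existsP/existsP => [] [e /andP [eF j]]; exists e;
  by rewrite eF /= joinsC.
Qed.

Lemma connC (F : {set E}) u v : connect (adj F) u v = connect (adj F) v u.
Proof. exact: (sym_connect_sym (adjC F)). Qed.

Lemma joins_ends (e : E) : joins e (ends e).1 (ends e).2.
Proof. by rewrite /joins -surjective_pairing eqxx. Qed.

Lemma adj_ends (F : {set E}) e : e \in F -> adj F (ends e).1 (ends e).2.
Proof. by move=> eF; apply/existsP; exists e; rewrite eF joins_ends. Qed.

Lemma joinsP (e : E) u v : joins e u v ->
  (u = (ends e).1 /\ v = (ends e).2) \/ (u = (ends e).2 /\ v = (ends e).1).
Proof.
case/orP=> /eqP ->; [left|right]; done.
Qed.

Lemma conn_mono (F F' : {set E}) x y : F \subset F' ->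
  connect (adj F) x y -> connect (adj F') x y.
Proof.
move=> sub; apply: (connect_inv (P := fun z => connect (adj F') x z)) (connect0 _ x) _ => z w Hz /existsP [e /andP [eF j]].
apply: connect_trans Hz (connect1 _); apply/existsP; exists e.
by rewrite (subsetP sub _ eF).
Qed.

Lemma acyclic_sub (F F' : {set E}) : acyclic F -> F' \subset F -> acyclic F'.
Proof.
move=> /forallP ac sub; apply/forallP => e; apply/implyP => eF'.
have := ac e; rewrite (subsetP sub _ eF') /=; apply: contra.
by apply: conn_mono; apply: setSD.
Qed.

Lemma conn_set0 x y : connect (adj (set0 : {set E})) x y -> x = y.
Proof.
apply: (connect_inv (P := fun z => x = z)) => // z w _ /existsP [e].
by rewrite inE.
Qed.

Lemma conn_split (F : {set E}) e x y : connect (adj F) x y ->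
  connect (adj (F :\ e)) x y \/
  (connect (adj (F :\ e)) x (ends e).1 /\ connect (adj (F :\ e)) (ends e).2 y) \/
  (connect (adj (F :\ e)) x (ends e).2 /\ connect (adj (F :\ e)) (ends e).1 y).
Proof.
apply: (connect_inv (P := fun y => connect (adj (F :\ e)) x y \/
  (connect (adj (F :\ e)) x (ends e).1 /\ connect (adj (F :\ e)) (ends e).2 y) \/
  (connect (adj (F :\ e)) x (ends e).2 /\ connect (adj (F :\ e)) (ends e).1 y))).
  by left; exact: connect0.
move=> z w Hz /existsP [f /andP [fF j]].
have [fe|fne] := eqVneq f e.
  subst f; case: (joinsP j) => [[? ?]|[? ?]]; subst z w.
  - case: Hz => [H1|[[H1 H2]|[H1 H2]]].
    + by right; left; split=> //; exact: connect0.
    + by right; left; split=> //; exact: connect0.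
    + by left.
  - case: Hz => [H1|[[H1 H2]|[H1 H2]]].
    + by right; right; split=> //; exact: connect0.
    + by left.
    + by right; right; split=> //; exact: connect0.
have a : adj (F :\ e) z w by apply/existsP; exists f; rewrite !inE fne fF.
case: Hz => [H1|[[H1 H2]|[H1 H2]]].
- by left; apply: connect_trans H1 (connect1 a).
- by right; left; split=> //; apply: connect_trans H2 (connect1 a).
- by right; right; split=> //; apply: connect_trans H2 (connect1 a).
Qed.

Lemma acyclicP (F : {set E}) e : acyclic F -> e \in F ->
  ~ connect (adj (F :\ e)) (ends e).1 (ends e).2.
Proof. by move=> /forallP /(_ e) /implyP H1 eF; apply/negP; apply: H1. Qed.

Lemma cycle_lemma (F A B : {set E}) a b : acyclic F -> A \subset F -> B \subset F ->
  [disjoint A & B] -> a != b -> connect (adj A) a b -> connect (adj B) a b -> False.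
Proof.
move=> ac sA sB dAB ab cA.
have [n] := ubnP #|B|; elim: n B sB dAB => // n IH B sB dAB lt cB.
have [B0|[e eB]] := set_0Vmem B.
  by subst B; move: ab; rewrite (conn_set0 cB) eqxx.
have sBe : B :\ e \subset F by apply: subset_trans sB; apply: subsetDl.
have dBe : [disjoint A & B :\ e].
  by apply: disjointWr dAB; apply: subsetDl.
have lt' : #|B :\ e| < n by move: lt; rewrite (cardsD1 e B) eB /=.
have eA : e \notin A by rewrite (disjointFl dAB eB).
have sub1 : B :\ e \subset F :\ e by apply: setSD.
have sub2 : A \subset F :\ e.
  apply/subsetP => x xA; rewrite !inE (subsetP sA _ xA) andbT.
  by apply: contraNneq eA => <-.
have cAe := conn_mono sub2 cA.
case: (conn_split e cB) => [H1|[[H1 H2]|[H1 H2]]].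
- exact: IH H1.
- apply: (acyclicP ac (subsetP sB _ eB)).
  have K1 := conn_mono sub1 H1; have K2 := conn_mono sub1 H2.
  rewrite connC in K1; rewrite connC in K2.
  apply: connect_trans K1 _; apply: connect_trans cAe _; exact: K2.
- apply: (acyclicP ac (subsetP sB _ eB)); rewrite connC.
  have K1 := conn_mono sub1 H1; have K2 := conn_mono sub1 H2.
  rewrite connC in K1; rewrite connC in K2.
  apply: connect_trans K1 _; apply: connect_trans cAe _; exact: K2.
Qed.


Definition cls (F : {set E}) (x : V) : {set V} := [set y | connect (adj F) x y].
Definition ncomp (F : {set E}) := #|cls F @: [set: V]|.

Lemma cls_eq F x y : connect (adj F) x y -> cls F x = cls F y.
Proof.
move=> cxy; apply/setP => z; rewrite !inE; apply/idP/idP => H1.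
  by rewrite connC in cxy; apply: connect_trans cxy H1.
by apply: connect_trans cxy H1.
Qed.

Lemma cls_conn F x y : cls F x = cls F y -> connect (adj F) x y.
Proof.
move=> E1; have : y \in cls F x by rewrite E1 inE connect0.
by rewrite inE.
Qed.

Lemma ncomp_step (F : {set E}) e : e \in F ->
  ~ connect (adj (F :\ e)) (ends e).1 (ends e).2 ->
  ncomp (F :\ e) = (ncomp F).+1.
Proof.
move=> eF nc; set F' := F :\ e.
pose g (C : {set V}) := [set z | [exists y in C, connect (adj F) y z]].
have gcls x : g (cls F' x) = cls F x.
  apply/setP => z; rewrite !inE; apply/existsP/idP => [[y /andP [yC yz]]|xz].
    move: yC; rewrite inE => /(conn_mono (subsetDl F [set e])) xy.
    exact: connect_trans xy yz.
  by exists x; rewrite inE connect0.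
have eqim : cls F @: [set: V] = g @: (cls F' @: [set: V]).
  rewrite -imset_comp; apply: eq_imset => x /=; by rewrite gcls.
set A := cls F' @: [set: V].
set p := cls F' (ends e).1; set q := cls F' (ends e).2.
have pA : p \in A by apply: imset_f; rewrite inE.
have qA : q \in A by apply: imset_f; rewrite inE.
have pq : p != q by apply/eqP => /cls_conn.
have gpq : g p = g q by rewrite /p /q !gcls; apply: cls_eq; apply: connect1; exact: adj_ends.
have eq2 : g @: A = g @: (A :\ p).
  apply/eqP; rewrite eqEsubset; apply/andP; split; last by apply: imsetS; apply: subsetDl.
  apply/subsetP => C /imsetP [D DA ->]; have [Dp|Dnp] := eqVneq D p.
    by rewrite Dp gpq; apply: imset_f; rewrite !inE eq_sym pq.
  by apply: imset_f; rewrite !inE Dnp.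
have inj : {in A :\ p &, injective g}.
  move=> C D; rewrite !inE => /andP [Cp /imsetP [x _ ?]] /andP [Dp /imsetP [y _ ?]]; subst C D.
  rewrite !gcls => /cls_conn cxy.
  case: (conn_split e cxy) => [H1|[[H1 H2]|[H1 H2]]].
  - exact: cls_eq.
  - by move: Cp; rewrite /p (cls_eq H1) eqxx.
  - by move: Dp; rewrite /p (cls_eq H2) eqxx.
rewrite /ncomp eqim eq2 (card_in_imset inj) (cardsD1 p A) pA.
by [].
Qed.

Lemma forest_count n (F : {set E}) : #|F| = n -> acyclic F -> #|F| + ncomp F = #|V|.
Proof.
elim: n F => [|n IH] F cF ac.
  move/eqP: cF; rewrite cards_eq0 => /eqP ->; rewrite cards0 add0n /ncomp.
  have -> : cls set0 @: [set: V] = set1 @: [set: V].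
    apply: eq_imset => x; apply/setP => y; rewrite !inE.
    apply/idP/eqP => [/conn_set0 -> //|<-]; exact: connect0.
  by rewrite card_imset ?cardsT //; exact: set1_inj.
have [e eF] : exists e, e \in F.
  by apply/set0Pn; rewrite -card_gt0 cF.
have cF' : #|F :\ e| = n by move: cF; rewrite (cardsD1 e F) eF => -[].
have := IH _ cF' (acyclic_sub ac (subsetDl F [set e])).
rewrite (ncomp_step eF (acyclicP ac eF)) (cardsD1 e F) eF cF'.
by rewrite addnS add1n.
Qed.

Lemma tree_card (T : {set E}) (x0 : V) : spanning_tree T -> (#|T|).+1 = #|V|.
Proof.
case/and3P => _ /forallP con ac.
have := forest_count (erefl _) ac.
suff -> : ncomp T = 1 by rewrite addn1.
rewrite /ncomp.
have -> : cls T @: [set: V] = [set [set: V]].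
  apply/setP => C; rewrite !inE; apply/imsetP/eqP => [[x _ ->]|->].
    apply/setP => y; rewrite !inE; move: (con x); rewrite inE => /forallP /(_ y).
    by rewrite inE.
  exists x0 => //; apply/setP => y; rewrite !inE; move: (con x0); rewrite inE => /forallP /(_ y).
  by rewrite inE.
by rewrite cards1.
Qed.

Lemma bisp_contra (x0 : V) (e0 : E) (S T : {set E}) : bispanning H ->
  spanning_tree S -> spanning_tree T -> [disjoint S & T] -> S :|: T = [set: E] :\ e0 -> False.
Proof.
case=> [A [B [tA tB dAB uAB]]] tS tT dST uST.
have cA := tree_card x0 tA; have cB := tree_card x0 tB.
have cS := tree_card x0 tS; have cT := tree_card x0 tT.
have h1 := cardsUI A B; have h2 := cardsUI S T.
move: dAB dST; rewrite -!setI_eq0 => /eqP dAB /eqP dST.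
rewrite dAB cards0 uAB cardsT in h1.
rewrite dST cards0 uST in h2.
have h3 := cardsD1 e0 [set: E]; rewrite inE cardsT in h3.
lia.
Qed.

End Gen.

Definition Fside (G GA : mgraph) (jA : gE GA -> gE G) (dA : gE GA) (S : {set gE G}) :
  {set gE GA} := [set e | (e != dA) && (jA e \in S)].
Definition Sside (G GA GB : mgraph) (jA : gE GA -> gE G) (jB : gE GB -> gE G)
  (dA : gE GA) (dB : gE GB) (S : {set gE G}) : {set gE GA} :=
  Fside jA dA S :|: (if connect (adj (Fside jB dB S)) (gends dB).1 (gends dB).2
                     then [set dA] else set0).
Definition Psi (G GA GB : mgraph) (jA : gE GA -> gE G) (jB : gE GB -> gE G)
  (dA : gE GA) (dB : gE GB) (S1 : {set gE GA}) (S2 : {set gE GB}) : {set gE G} :=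
  jA @: (S1 :\ dA) :|: jB @: (S2 :\ dB).

Lemma lift (G GA : mgraph) (iA : gV GA -> gV G) (jA : gE GA -> gE G) (dA : gE GA)
  (hj : forall e, e != dA -> joins (jA e) (iA (gends e).1) (iA (gends e).2))
  (K : {set gE GA}) (F : {set gE G}) :
  (forall e, e \in K -> e != dA -> jA e \in F) ->
  (dA \in K -> connect (adj F) (iA (gends dA).1) (iA (gends dA).2)) ->
  forall x y, connect (adj K) x y -> connect (adj F) (iA x) (iA y).
Proof.
move=> hK hd x y; apply: (connect_inv (P := fun z => connect (adj F) (iA x) (iA z))).
  exact: connect0.
move=> z w Hz /existsP [e /andP [eK j]]; apply: connect_trans Hz _.
have [ed|ned] := eqVneq e dA.
  subst e; have := hd eK; case: (joinsP j) => [[-> ->]|[-> ->]] //.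
  by rewrite connC.
apply: connect1; apply/existsP; exists (jA e); rewrite (hK _ eK ned) /=.
have := hj _ ned; case: (joinsP j) => [[-> ->]|[-> ->]] //.
by rewrite joinsC.
Qed.

Lemma disjP (T : finType) (A B : {pred T}) :
  (forall x, x \in A -> x \in B -> False) -> [disjoint A & B].
Proof.
move=> H; rewrite disjoint_subset; apply/subsetP => x xA.
by rewrite inE /=; apply/negP => xB; exact: (H x xA xB).
Qed.

Lemma joins2 (G : mgraph) (f : gE G) a b z w :
  joins f a b -> joins f z w -> (z = a /\ w = b) \/ (z = b /\ w = a).
Proof.
case/joinsP=> [[-> ->]|[-> ->]] /joinsP [[-> ->]|[-> ->]]; by [left|right].
Qed.

Record side_hyps (G GA GB : mgraph) (iA : gV GA -> gV G) (iB : gV GB -> gV G)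
  (jA : gE GA -> gE G) (jB : gE GB -> gE G) (dA : gE GA) (dB : gE GB) : Prop := SideHyps {
  sh_iA_inj : injective iA;
  sh_iB_inj : injective iB;
  sh_iu : iA (gends dA).1 = iB (gends dB).1;
  sh_iv : iA (gends dA).2 = iB (gends dB).2;
  sh_imeet : forall x y, iA x = iB y -> (x = (gends dA).1 /\ y = (gends dB).1) \/ (x = (gends dA).2 /\ y = (gends dB).2);
  sh_icov : forall v, (exists x, iA x = v) \/ (exists y, iB y = v);
  sh_jA_inj : forall e e', e != dA -> e' != dA -> jA e = jA e' -> e = e';
  sh_jB_inj : forall e e', e != dB -> e' != dB -> jB e = jB e' -> e = e';
  sh_jAB : forall e1 e2, e1 != dA -> e2 != dB -> jA e1 <> jB e2;
  sh_jcov : forall e, (exists e1, e1 != dA /\ jA e1 = e) \/ (exists e2, e2 != dB /\ jB e2 = e);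
  sh_jA_joins : forall e, e != dA -> joins (jA e) (iA (gends e).1) (iA (gends e).2);
  sh_jB_joins : forall e, e != dB -> joins (jB e) (iB (gends e).1) (iB (gends e).2) }.

Section Side.
Variables (G GA GB : mgraph) (iA : gV GA -> gV G) (iB : gV GB -> gV G)
  (jA : gE GA -> gE G) (jB : gE GB -> gE G) (dA : gE GA) (dB : gE GB).
Local Notation uA := (gends dA).1.
Local Notation vA := (gends dA).2.
Local Notation uB := (gends dB).1.
Local Notation vB := (gends dB).2.
Variable hs : side_hyps iA iB jA jB dA dB.
Let iA_inj := sh_iA_inj hs.
Let iB_inj := sh_iB_inj hs.
Let iu := sh_iu hs.
Let iv := sh_iv hs.
Let imeet := sh_imeet hs.
Let icov := sh_icov hs.
Let jA_inj := sh_jA_inj hs.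
Let jB_inj := sh_jB_inj hs.
Let jAB := sh_jAB hs.
Let jcov := sh_jcov hs.
Let jA_joins := sh_jA_joins hs.
Let jB_joins := sh_jB_joins hs.

Local Notation FA := (Fside jA dA).
Local Notation FB := (Fside jB dB).
Local Notation SA := (Sside jA jB dA dB).
Local Notation DA S := (connect (adj (Fside jB dB S)) uB vB).

Definition pA (S : {set gE G}) (w : gV G) : gV GA :=
  match [pick x | iA x == w] with Some x => x | None =>
   match [pick y | iB y == w] with
   | Some y => if connect (adj (FB S)) vB y then vA else uA
   | None => uA end end.

Lemma pA_iA S x : pA S (iA x) = x.
Proof. by rewrite /pA; case: pickP => [x' /eqP /iA_inj -> //| /(_ x)]; rewrite eqxx. Qed.

Lemma uBvB : uB != vB.
Proof. exact: gnoloop. Qed.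

Lemma pA_iB S y : pA S (iB y) =
  if y == uB then uA else if connect (adj (FB S)) vB y then vA else uA.
Proof.
rewrite /pA; case: pickP => [x /eqP e|none].
  case: (imeet e) => [[-> ->]|[-> ->]]; first by rewrite eqxx.
  by rewrite eq_sym (negbTE uBvB) connect0.
case: pickP => [y' /eqP /iB_inj ->|/(_ y)]; last by rewrite eqxx.
case: eqVneq => // yu; by move: (none uA); rewrite iu yu eqxx.
Qed.

Lemma mem_dA_SA S : (dA \in SA S) = DA S.
Proof. by rewrite /Sside !inE eqxx /=; case: (DA S); rewrite !inE ?eqxx. Qed.

Lemma SA_Fne S e : e != dA -> (e \in SA S) = (e \in FA S).
Proof.
by move=> ne; rewrite /Sside inE; case: (DA S); rewrite !inE ?(negbTE ne) ?orbF.
Qed.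

Lemma FA_dA S : dA \notin FA S.
Proof. by rewrite inE eqxx. Qed.

Lemma SA_D S : SA S :\ dA = FA S.
Proof.
apply/setP => e; rewrite in_setD1; case: eqVneq => [->|ne] /=.
  by rewrite (negbTE (FA_dA S)).
by rewrite SA_Fne.
Qed.

Lemma stepB S a b : adj (FB S) a b ->
  pA S (iB a) = pA S (iB b) \/ adj (SA S) (pA S (iB a)) (pA S (iB b)).
Proof.
move=> ab; have cab : connect (adj (FB S)) a b by apply: connect1.
have cba : connect (adj (FB S)) b a by rewrite connC.
have eqv : connect (adj (FB S)) vB a = connect (adj (FB S)) vB b.
  apply/idP/idP => H1; [exact: connect_trans H1 cab|exact: connect_trans H1 cba].
have dd : DA S -> adj (SA S) uA vA.
  by move=> h; apply: adj_ends; rewrite mem_dA_SA.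
rewrite !pA_iB; case: eqVneq => [ea|nea]; case: eqVneq => [eb|neb].
- by left.
- case hv: (connect (adj (FB S)) vB b); last by left.
  right; apply: dd; rewrite -ea; rewrite connC; exact: connect_trans hv cba.
- case hv: (connect (adj (FB S)) vB a); last by left.
  right; rewrite adjC; apply: dd; rewrite -eb connC; exact: connect_trans hv cab.
- by left; rewrite eqv.
Qed.

Lemma proj S x y : connect (adj S) (iA x) (iA y) -> connect (adj (SA S)) x y.
Proof.
suff H1 : forall w w', connect (adj S) w w' ->
    connect (adj (SA S)) (pA S w) (pA S w').
  by move/H1; rewrite !pA_iA.
move=> w w'; apply: (connect_inv (P := fun z => connect (adj (SA S)) (pA S w) (pA S z))).
  exact: connect0.
move=> z z' Hz /existsP [f /andP [fS j]].
suff : pA S z = pA S z' \/ adj (SA S) (pA S z) (pA S z').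
  case=> [<- //|a]; exact: connect_trans Hz (connect1 a).
case: (jcov f) => [[e [ne ef]]|[e [ne ef]]]; subst f.
  have eF : e \in FA S by rewrite inE ne fS.
  have ad : adj (SA S) (gends e).1 (gends e).2 by apply: adj_ends; rewrite SA_Fne.
  case: (joins2 (jA_joins ne) j) => [[-> ->]|[-> ->]]; rewrite !pA_iA; right => //.
  by rewrite adjC.
have eF : e \in FB S by rewrite inE ne fS.
have ad := adj_ends eF.
case: (joins2 (jB_joins ne) j) => [[-> ->]|[-> ->]]; first exact: stepB.
rewrite adjC in ad; exact: stepB.
Qed.

Lemma iuv : iA uA != iA vA.
Proof. by rewrite (inj_eq iA_inj); exact: gnoloop. Qed.

Lemma liftB (K : {set gE GB}) (F : {set gE G}) :
  (forall e, e \in K -> e != dB -> jB e \in F) -> dB \notin K ->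
  connect (adj K) uB vB -> connect (adj F) (iA uA) (iA vA).
Proof.
move=> hK hd c; rewrite iu iv; apply: (lift jB_joins hK) c.
by move=> h; move: hd; rewrite h.
Qed.

Lemma not_both S : acyclic S -> connect (adj (FA S)) uA vA ->
  connect (adj (FB S)) uB vB -> False.
Proof.
move=> ac cA cB.
apply: (cycle_lemma (A := jA @: FA S) (B := jB @: FB S) ac _ _ _ iuv).
- apply/subsetP => f /imsetP [e]; rewrite inE => /andP [_ h] ->; exact: h.
- apply/subsetP => f /imsetP [e]; rewrite inE => /andP [_ h] ->; exact: h.
- apply: disjP => f /imsetP [e]; rewrite inE => /andP [ne _] -> /imsetP [e'].
  rewrite inE => /andP [ne' _]; exact: jAB.
- apply: (lift jA_joins (K := FA S)) cA => [e eK _|h]; first exact: imset_f.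
  by move: (FA_dA S); rewrite h.
- apply: (liftB (K := FB S)) cB => [e eK _|]; first exact: imset_f.
  by rewrite inE eqxx.
Qed.

Lemma SA_tree S : spanning_tree S -> spanning_tree (SA S).
Proof.
case/and3P => _ /forallP con ac; apply/and3P; split; first exact: subsetT.
  apply/forallP => x; apply/implyP => _; apply/forallP => y; apply/implyP => _.
  apply: proj; move: (con (iA x)); rewrite inE => /forallP /(_ (iA y)).
  by rewrite inE.
apply/forallP => e; apply/implyP => eS.
have [ed|ne] := eqVneq e dA.
  subst e; rewrite SA_D; apply/negP => cA.
  by apply: (not_both ac cA); rewrite -mem_dA_SA.
apply/negP => c.
have eF : e \in FA S by rewrite -SA_Fne.
move: (eF); rewrite inE => /andP [_ jeS].
apply: (acyclicP ac jeS).
have c' : connect (adj (S :\ jA e)) (iA (gends e).1) (iA (gends e).2).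
  apply: (lift jA_joins (K := SA S :\ e)) c => [e' |].
    rewrite in_setD1 => /andP [ne' e'S] nd'; move: e'S; rewrite SA_Fne // inE => /andP [_ e'S].
    rewrite in_setD1 e'S andbT; apply/negP => /eqP /(jA_inj nd' ne) h; by move: ne'; rewrite h eqxx.
  rewrite in_setD1 => /andP [_ dS]; move: dS; rewrite mem_dA_SA => dS.
  apply: (liftB (K := FB S)) dS => [e' |]; last by rewrite inE eqxx.
  rewrite inE => /andP [ne' e'S] _; rewrite in_setD1 e'S andbT; apply/eqP => h.
  by apply: (jAB ne ne'); rewrite h.
by case: (joinsP (jA_joins ne)) => [[<- <-]|[<- <-]] //; rewrite connC.
Qed.

Lemma SA_disj (S T : {set gE G}) : [disjoint S & T] -> ~~ (DA S && DA T) -> [disjoint SA S & SA T].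
Proof.
move=> dST nd; apply: disjP => e eS eT.
have [ed|ne] := eqVneq e dA.
  by subst e; move: eS eT nd; rewrite !mem_dA_SA => -> ->.
move: eS eT; rewrite !SA_Fne // !inE => /andP [_ h1] /andP [_ h2].
by move: (disjointFl dST h2); rewrite h1.
Qed.

Lemma SA_union (S T : {set gE G}) : S :|: T = setT -> DA S || DA T -> SA S :|: SA T = setT.
Proof.
move=> uST dd; apply/setP => e; rewrite in_setT in_setU.
have [ed|ne] := eqVneq e dA; first by subst e; rewrite !mem_dA_SA.
have : jA e \in S :|: T by rewrite uST inE.
by rewrite !SA_Fne // !inE ne.
Qed.

Lemma union_claim (S T : {set gE G}) : bispanning GA -> spanning_tree S -> spanning_tree T ->
  [disjoint S & T] -> S :|: T = setT -> ~~ DA S -> ~~ DA T -> False.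
Proof.
move=> bA tS tT dST uST nS nT.
have eS : SA S = FA S by rewrite /Sside (negbTE nS) setU0.
have eT : SA T = FA T by rewrite /Sside (negbTE nT) setU0.
apply: (bisp_contra uA (e0 := dA) bA (SA_tree tS) (SA_tree tT)).
  by apply: SA_disj => //; rewrite (negbTE nS).
rewrite eS eT; apply/setP => e; rewrite !inE; case: eqVneq => //= ne.
have h : jA e \in S :|: T by rewrite uST inE.
by rewrite inE in h.
Qed.


Local Notation Ps := (Psi jA jB dA dB).

Lemma FA_Psi S1 S2 : FA (Ps S1 S2) = S1 :\ dA.
Proof.
apply/setP => e; rewrite inE in_setD1; case: eqVneq => //= ne.
rewrite in_setU; apply/orP/idP => [[/imsetP [e' e'in h]|/imsetP [e' e'in h]]|eS].
- move: e'in; rewrite in_setD1 => /andP [ne' e'S]; by rewrite (jA_inj ne ne' h).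
- move: e'in; rewrite in_setD1 => /andP [ne' _]; by case: (jAB ne ne' h).
- by left; apply: imset_f; rewrite in_setD1 ne.
Qed.

Lemma FB_Psi S1 S2 : FB (Ps S1 S2) = S2 :\ dB.
Proof.
apply/setP => e; rewrite inE in_setD1; case: eqVneq => //= ne.
rewrite in_setU; apply/orP/idP => [[/imsetP [e' e'in h]|/imsetP [e' e'in h]]|eS].
- move: e'in; rewrite in_setD1 => /andP [ne' _]; by case: (jAB ne' ne (esym h)).
- move: e'in; rewrite in_setD1 => /andP [ne' e'S]; by rewrite (jB_inj ne ne' h).
- by right; apply: imset_f; rewrite in_setD1 ne.
Qed.

Lemma FA_del S e : e != dA -> FA (S :\ jA e) = FA S :\ e.
Proof.
move=> ne; apply/setP => e'; rewrite !inE.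
case: (eqVneq e' e) => [->|ne2] /=; first by rewrite eqxx !andbF.
case: (eqVneq e' dA) => //= ne'.
case: eqVneq => //= /(jA_inj ne' ne) h; by move: ne2; rewrite h eqxx.
Qed.

Lemma FB_del S e : e != dA -> FB (S :\ jA e) = FB S.
Proof.
move=> ne; apply/setP => e'; rewrite !inE; case: eqVneq => //= ne'.
case: eqVneq => //= h; by case: (jAB ne ne' (esym h)).
Qed.

Lemma setD1_notin (T : finType) (A : {set T}) x : x \notin A -> A :\ x = A.
Proof.
by move=> nx; apply/setP => z; rewrite in_setD1; case: eqVneq => // ->; rewrite (negbTE nx).
Qed.

Section PsiProps.
Variables (S1 : {set gE GA}) (S2 : {set gE GB}).
Hypotheses (t1 : spanning_tree S1) (t2 : spanning_tree S2)
  (hd : (dA \in S1) = (dB \notin S2)).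

Lemma tree_conn (H : mgraph) (T : {set gE H}) x y : spanning_tree T -> connect (adj T) x y.
Proof.
case/and3P => _ /forallP /(_ x); rewrite inE => /forallP /(_ y); by rewrite inE.
Qed.

Lemma DA_Psi : DA (Ps S1 S2) = (dA \in S1).
Proof.
rewrite FB_Psi hd; case: (boolP (dB \in S2)) => /= h.
  by apply/negP; apply: (acyclicP (H := GB) _ h); case/and3P: t2.
by rewrite setD1_notin //; exact: tree_conn.
Qed.

Lemma SA_Psi : SA (Ps S1 S2) = S1.
Proof.
rewrite /Sside DA_Psi FA_Psi; case: (boolP (dA \in S1)) => h.
  by rewrite setUC setD1K.
by rewrite setU0 setD1_notin.
Qed.

Lemma conn_Psi_A x y : connect (adj (Ps S1 S2)) (iA x) (iA y).
Proof.
apply: (lift jA_joins (K := S1)); last exact: tree_conn.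
  by move=> e eS ne; rewrite in_setU imset_f // in_setD1 ne.
move=> dS; apply: (liftB (K := S2)).
- by move=> e eS ne; rewrite in_setU orbC imset_f // in_setD1 ne.
- by rewrite -hd.
- exact: tree_conn.
Qed.

Lemma acyc_Psi_A e : e \in S1 -> e != dA ->
  ~ connect (adj (Ps S1 S2 :\ jA e)) (iA (gends e).1) (iA (gends e).2).
Proof.
move=> eS ne /proj.
have -> : SA (Ps S1 S2 :\ jA e) = S1 :\ e.
  rewrite /Sside FA_del // FB_del // DA_Psi FA_Psi.
  apply/setP => z; rewrite !inE; case: eqVneq => [->|nz] /=.
    by case: (dA \in S1); rewrite ?inE ?(negbTE ne).
  case: (eqVneq z dA) => [->|nz2] /=; case: (boolP (dA \in S1)) => h; rewrite ?inE ?eqxx ?h ?(negbTE nz2) ?orbF //.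
by apply: (acyclicP (H := GA) _ eS); case/and3P: t1.
Qed.

End PsiProps.

Lemma Psi_FA_FB S : jA @: FA S :|: jB @: FB S = S.
Proof.
apply/setP => f; rewrite in_setU; apply/orP/idP.
  by case=> /imsetP [e]; rewrite inE => /andP [_ h] ->.
move=> fS; case: (jcov f) => [[e [ne ef]]|[e [ne ef]]]; subst f.
  by left; apply: imset_f; rewrite inE ne.
by right; apply: imset_f; rewrite inE ne.
Qed.

Lemma Psi_disj (S1 T1 : {set gE GA}) (S2 T2 : {set gE GB}) : [disjoint S1 & T1] -> [disjoint S2 & T2] ->
  [disjoint Ps S1 S2 & Ps T1 T2].
Proof.
move=> d1 d2; apply: disjP => f; rewrite !in_setU.
case/orP=> /imsetP [e]; rewrite in_setD1 => /andP [ne eS] ->;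
  case/orP=> /imsetP [e']; rewrite in_setD1 => /andP [ne' eT].
- move/(jA_inj ne ne') => h; subst e'; by move: (disjointFl d1 eT); rewrite eS.
- exact: jAB.
- move=> h; exact: (jAB ne' ne (esym h)).
- move/(jB_inj ne ne') => h; subst e'; by move: (disjointFl d2 eT); rewrite eS.
Qed.

Lemma Psi_union (S1 T1 : {set gE GA}) (S2 T2 : {set gE GB}) : S1 :|: T1 = setT -> S2 :|: T2 = setT ->
  Ps S1 S2 :|: Ps T1 T2 = setT.
Proof.
move=> u1 u2; apply/setP => f; rewrite in_setT !in_setU.
case: (jcov f) => [[e [ne ef]]|[e [ne ef]]]; subst f.
  have : e \in S1 :|: T1 by rewrite u1 inE.
  rewrite in_setU => /orP [h|h].
    have m : jA e \in jA @: (S1 :\ dA) by apply: imset_f; rewrite in_setD1 ne h.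
    by rewrite m.
  have m : jA e \in jA @: (T1 :\ dA) by apply: imset_f; rewrite in_setD1 ne h.
  by rewrite m orbT.
have : e \in S2 :|: T2 by rewrite u2 inE.
rewrite in_setU => /orP [h|h].
  have m : jB e \in jB @: (S2 :\ dB) by apply: imset_f; rewrite in_setD1 ne h.
  by rewrite m orbT.
have m : jB e \in jB @: (T2 :\ dB) by apply: imset_f; rewrite in_setD1 ne h.
by rewrite m !orbT.
Qed.

End Side.

Lemma Psi_swap (G GA GB : mgraph) (jA : gE GA -> gE G) (jB : gE GB -> gE G) dA dB S1 S2 :
  Psi jB jA dB dA S2 S1 = Psi jA jB dA dB S1 S2.
Proof. by rewrite /Psi setUC. Qed.

Lemma memC (T : finType) (A B : {set T}) x : [disjoint A & B] -> A :|: B = setT ->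
  (x \in B) = (x \notin A).
Proof.
move=> d u; case xA: (x \in A) => /=; first by rewrite (disjointFr d xA).
have h : x \in A :|: B by rewrite u inE.
by rewrite inE xA in h.
Qed.

Lemma Psi_tree (G GA GB : mgraph) (iA : gV GA -> gV G) (iB : gV GB -> gV G)
  (jA : gE GA -> gE G) (jB : gE GB -> gE G) (dA : gE GA) (dB : gE GB)
  (S1 : {set gE GA}) (S2 : {set gE GB}) :
  side_hyps iA iB jA jB dA dB -> side_hyps iB iA jB jA dB dA ->
  spanning_tree S1 -> spanning_tree S2 -> (dA \in S1) = (dB \notin S2) ->
  spanning_tree (Psi jA jB dA dB S1 S2).
Proof.
move=> hAB hBA t1 t2 hd.
have hd' : (dB \in S2) = (dA \notin S1) by rewrite hd negbK.
have cA := conn_Psi_A hAB t1 t2 hd.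
have cB := conn_Psi_A hBA t2 t1 hd'; rewrite Psi_swap in cB.
have toU w : connect (adj (Psi jA jB dA dB S1 S2)) w (iA (gends dA).1).
  case: (sh_icov hAB w) => [[x <-]|[y <-]]; first exact: cA.
  by rewrite (sh_iu hAB); exact: cB.
apply/and3P; split; first exact: subsetT.
  apply/forallP => w; apply/implyP => _; apply/forallP => w'; apply/implyP => _.
  by apply: connect_trans (toU w) _; rewrite connC.
apply/forallP => f; apply/implyP; rewrite in_setU => /orP [] /imsetP [e];
  rewrite in_setD1 => /andP [ne eS] ->; apply/negP.
  have := acyc_Psi_A hAB t1 t2 hd eS ne.
  by case: (joinsP (sh_jA_joins hAB ne)) => [[<- <-]|[<- <-]] // H1 H2; apply: H1; rewrite connC.
have := acyc_Psi_A hBA t2 t1 hd' eS ne; rewrite Psi_swap.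
by case: (joinsP (sh_jA_joins hBA ne)) => [[<- <-]|[<- <-]] // H1 H2; apply: H1; rewrite connC.
Qed.

Theorem mainTheorem19 (G G1 G2 : mgraph) (d1 : gE G1) (d2 : gE G2) :
  atomic G -> vertex_connectivity_two G ->
  simple_graph G1 -> simple_graph G2 -> bispanning G1 -> bispanning G2 ->
  clique_sum2 G G1 G2 d1 d2 ->
  exists f : {x | x \in Vtau G} -> {y | y \in Veta d1 d2}, bijective f.
Proof.
move=> _ _ _ _ b1 b2 [i1 [i2 [j1 [j2 [[ii1 ii2] [iu iv] [imeet icov]
   [jinj1 [jinj2 [j12 jcov]]] [jj1 jj2]]]]]].
have h12 : side_hyps i1 i2 j1 j2 d1 d2 by constructor.
have h21 : side_hyps i2 i1 j2 j1 d2 d1.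
  constructor => //.
  - by move=> x y /esym /imeet [[-> ->]|[-> ->]]; [left|right].
  - by move=> v; case: (icov v); [right|left].
  - by move=> e1 e2 n1 n2 h; exact: (j12 _ _ n2 n1 (esym h)).
  - by move=> e; case: (jcov e); [right|left].
pose phi (p : {set gE G} * {set gE G}) :=
  ((Sside j1 j2 d1 d2 p.1, Sside j1 j2 d1 d2 p.2),
   (Sside j2 j1 d2 d1 p.1, Sside j2 j1 d2 d1 p.2)).
pose psi (q : ({set gE G1} * {set gE G1}) * ({set gE G2} * {set gE G2})) :=
  (Psi j1 j2 d1 d2 q.1.1 q.2.1, Psi j1 j2 d1 d2 q.1.2 q.2.2).
have phi_in p : p \in Vtau G -> phi p \in Veta d1 d2.
  case: p => S T; rewrite inE /= => /and4P [tS tT dST /eqP uST].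
  have acS : acyclic S by case/and3P: tS.
  have acT : acyclic T by case/and3P: tT.
  have nbS := not_both h12 acS; have nbT := not_both h12 acT.
  have uc1 := union_claim h12 b1 tS tT dST uST.
  have uc2 := union_claim h21 b2 tS tT dST uST.
  rewrite /Veta inE /= !mem_dA_SA.
  move: nbS nbT uc1 uc2.
  set a := connect _ (gends d2).1 (gends d2).2.
  set b := connect _ (gends d2).1 (gends d2).2.
  set c := connect _ (gends d1).1 (gends d1).2.
  set d := connect _ (gends d1).1 (gends d1).2.
  move=> nbS nbT uc1 uc2.
  have Hab : ~~ (a && b).
    apply/negP => /andP [ha hb]; case: (boolP c) => hc; first exact: nbS hc ha.
    case: (boolP d) => hd; first exact: nbT hd hb.
    exact: uc2.
  have Hcd : ~~ (c && d).
    apply/negP => /andP [hc hd]; case: (boolP a) => ha; first exact: nbS hc ha.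
    case: (boolP b) => hb; first exact: nbT hd hb.
    exact: uc1.
  have ab : a || b.
    by case: (boolP a) => //= ha; case: (boolP b) => // hb; case: (uc1 ha hb).
  have cd : c || d.
    by case: (boolP c) => //= hc; case: (boolP d) => // hd; case: (uc2 hc hd).
  have V1 : (Sside j1 j2 d1 d2 S, Sside j1 j2 d1 d2 T) \in Vtau G1.
    rewrite inE /= !(SA_tree h12) // (SA_disj _ _ dST Hab) /=.
    by rewrite (SA_union _ _ uST ab) eqxx.
  have V2 : (Sside j2 j1 d2 d1 S, Sside j2 j1 d2 d1 T) \in Vtau G2.
    rewrite inE /= !(SA_tree h21) // (SA_disj _ _ dST Hcd) /=.
    by rewrite (SA_union _ _ uST cd) eqxx.
  rewrite V1 V2 /=.
  clear uc1 uc2 V1 V2; move: Hab Hcd ab cd nbS nbT.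
  by case: a; case: b; case: c; case: d => //= _ _ _ _ h1 h2;
    try (by case: h1); try (by case: h2).
have psi_in q : q \in Veta d1 d2 -> psi q \in Vtau G.
  case: q => [[S1 T1] [S2 T2]]; rewrite /Veta !inE /=.
  case/and3P => /and4P [tS1 tT1 dd1 /eqP uu1] /and4P [tS2 tT2 dd2 /eqP uu2] cond.
  rewrite (memC _ dd1 uu1) (memC _ dd2 uu2) in cond.
  have hS : (d1 \in S1) = (d2 \notin S2).
    by move: cond; case: (d1 \in S1); case: (d2 \in S2).
  have hT : (d1 \in T1) = (d2 \notin T2).
    by rewrite (memC _ dd1 uu1) (memC _ dd2 uu2) hS.
  rewrite !(Psi_tree h12 h21) //= (Psi_disj h12 dd1 dd2) (Psi_union h12 uu1 uu2).
  by rewrite eqxx.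
have can1 p : psi (phi p) = p.
  case: p => S T; rewrite /psi /phi /= /Psi !SA_D.
  by rewrite !(Psi_FA_FB h12).
have can2 q : q \in Veta d1 d2 -> phi (psi q) = q.
  case: q => [[S1 T1] [S2 T2]]; rewrite /Veta !inE /=.
  case/and3P => /and4P [tS1 tT1 dd1 /eqP uu1] /and4P [tS2 tT2 dd2 /eqP uu2] cond.
  rewrite (memC _ dd1 uu1) (memC _ dd2 uu2) in cond.
  have hS : (d1 \in S1) = (d2 \notin S2).
    by move: cond; case: (d1 \in S1); case: (d2 \in S2).
  have hT : (d1 \in T1) = (d2 \notin T2).
    by rewrite (memC _ dd1 uu1) (memC _ dd2 uu2) hS.
  have hS' : (d2 \in S2) = (d1 \notin S1) by rewrite hS negbK.
  have hT' : (d2 \in T2) = (d1 \notin T1) by rewrite hT negbK.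
  rewrite /phi /psi /= !(SA_Psi h12) // -!(Psi_swap j1) !(SA_Psi h21) //.
exists (fun x => exist _ (phi (sval x)) (phi_in _ (svalP x))).
exists (fun y => exist _ (psi (sval y)) (psi_in _ (svalP y))).
  by move=> [x xin]; apply: val_inj => /=; rewrite can1.
by move=> [y yin]; apply: val_inj => /=; rewrite can2.
Qed.
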